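(* Let $0\le a\le b\le1$, and in $l_\infty^2$ let $H_1=\{(\xi_1,\xi_2):\xi_2\ge a\xi_1\}$ and $H_2=\{(\xi_1,\xi_2):\xi_2\le b\xi_1\}$ with the restricted metrics. Let $X$ be the gluing of $H_1$ and $H_2$ along $\mathbb{R}$ via the isometries $\xi\mapsto(\xi,a\xi)\in H_1$ and $\xi\mapsto(\xi,b\xi)\in H_2$ (i.e. identifying $(\xi,a\xi)$ with $(\xi,b\xi)$). Then $X$ is hyperconvex if and only if $a=b$.
   Context: $l_\infty^2$ is $\mathbb{R}^2$ with the metric $d((\xi_1,\xi_2),(\eta_1,\eta_2))=\max(|\xi_1-\eta_1|,|\xi_2-\eta_2|)$. A metric space is hyperconvex if every collection of closed balls $\{B(x_i,r_i)\}$ with $d(x_i,x_j)\le r_i+r_j$ has non-empty intersection. The gluing of $X_1,X_2$ along $A$ via isometric embeddings $\varphi_k\colon A\to X_k$ with closed images is $X_1\sqcup X_2/(\varphi_1(a)\sim\varphi_2(a))$ with metric $d_k$ on $X_k$ and $d(x,y)=\inf_{a\in A}\{d_1(x,\varphi_1(a))+d_2(\varphi_2(a),y)\}$ for $x\in X_1,y\in X_2$. *)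

(* Defs.v *)
From Stdlib Require Import Reals Lra.
Open Scope R_scope.

Definition linf (p q : R * R) : R :=
  Rmax (Rabs (fst p - fst q)) (Rabs (snd p - snd q)).

Lemma linf_nonneg (p q : R * R) : 0 <= linf p q.
Proof. unfold linf. eapply Rle_trans; [apply Rabs_pos | apply Rmax_l]. Qed.

Definition hyperconvex {T : Type} (d : T -> T -> R) : Prop :=
  forall (I : Type) (x : I -> T) (r : I -> R),
    (forall i j, d (x i) (x j) <= r i + r j) ->
    exists z : T, forall i, d (x i) z <= r i.

Section Inf.
Variable f : R -> R.
Hypothesis f_nonneg : forall t, 0 <= f t.
Let E : R -> Prop := fun y => exists t, y = - f t.
Lemma infE_bound : bound E.
Proof. exists 0. intros y [t ->]. specialize (f_nonneg t). lra. Qed.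
Lemma infE_ne : exists y, E y.
Proof. exists (- f 0). exists 0. reflexivity. Qed.
Definition inf_nonneg : R := - proj1_sig (completeness E infE_bound infE_ne).
End Inf.

Definition H1 (a : R) := { p : R * R | a * fst p <= snd p }.
Definition H2 (b : R) := { p : R * R | snd p <= b * fst p }.

(* Carrier of the gluing: the disjoint union H1 + H2 (equipped with the
   gluing pseudometric; the glued space X is its metric quotient). *)
Definition Glue (a b : R) : Type := (H1 a + H2 b)%type.

Definition cross (a b : R) (p q : R * R) : R :=
  inf_nonneg (fun t => linf p (t, a * t) + linf (t, b * t) q)
    (fun t => Rplus_le_le_0_compat _ _ (linf_nonneg _ _) (linf_nonneg _ _)).

Definition dGlue (a b : R) (x y : Glue a b) : R :=
  match x, y with
  | inl p, inl q => linf (proj1_sig p) (proj1_sig q)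
  | inr p, inr q => linf (proj1_sig p) (proj1_sig q)
  | inl p, inr q => cross a b (proj1_sig p) (proj1_sig q)
  | inr p, inl q => cross a b (proj1_sig q) (proj1_sig p)
  end.

(* Main.v *)
Require Import Defs.
From Stdlib Require Import Reals.
From Stdlib Require Import Lra Psatz Classical.
Open Scope R_scope.

Lemma inf_le (f : R -> R) (H : forall t, 0 <= f t) t : inf_nonneg f H <= f t.
Proof.
  unfold inf_nonneg. destruct (completeness _ _ _) as [m [Hub Hl]]. simpl.
  assert (- f t <= m) by (apply Hub; exists t; reflexivity). lra.
Qed.

Lemma inf_ge (f : R -> R) (H : forall t, 0 <= f t) c :
  (forall t, c <= f t) -> c <= inf_nonneg f H.
Proof.
  intros Hc. unfold inf_nonneg. destruct (completeness _ _ _) as [m [Hub Hl]]. simpl.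
  assert (m <= - c). { apply Hl. intros y [t ->]. specialize (Hc t). lra. }
  lra.
Qed.

Lemma inf_approx (f : R -> R) (H : forall t, 0 <= f t) r eps :
  inf_nonneg f H <= r -> 0 < eps -> exists t, f t < r + eps.
Proof.
  intros Hr He. destruct (classic (exists t, f t < r + eps)) as [?|Hn]; auto.
  exfalso. assert (r + eps <= inf_nonneg f H).
  { apply inf_ge. intros t. destruct (Rlt_or_le (f t) (r+eps)); auto.
    exfalso; apply Hn; eauto. }
  lra.
Qed.

Lemma linf_sym p q : linf p q = linf q p.
Proof. unfold linf. rewrite (Rabs_minus_sym (fst p)), (Rabs_minus_sym (snd p)). reflexivity. Qed.

Lemma linf_1 p q : Rabs (fst p - fst q) <= linf p q.
Proof. apply Rmax_l. Qed.
Lemma linf_2 p q : Rabs (snd p - snd q) <= linf p q.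
Proof. apply Rmax_r. Qed.

Lemma abs_ge x : x <= Rabs x /\ - x <= Rabs x.
Proof. split; [apply Rle_abs | rewrite <- Rabs_Ropp; apply Rle_abs]. Qed.

Lemma linf_tri p q r : linf p r <= linf p q + linf q r.
Proof.
  unfold linf. apply Rmax_lub.
  - replace (fst p - fst r) with ((fst p - fst q) + (fst q - fst r)) by ring.
    eapply Rle_trans; [apply Rabs_triang|]. apply Rplus_le_compat; apply Rmax_l.
  - replace (snd p - snd r) with ((snd p - snd q) + (snd q - snd r)) by ring.
    eapply Rle_trans; [apply Rabs_triang|]. apply Rplus_le_compat; apply Rmax_r.
Qed.

Lemma linf_le p q M : Rabs (fst p - fst q) <= M -> Rabs (snd p - snd q) <= M -> linf p q <= M.
Proof. intros; apply Rmax_lub; auto. Qed.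

Lemma helly1 (I : Type) (c r : I -> R) :
  (forall i j, Rabs (c i - c j) <= r i + r j) -> exists z, forall i, Rabs (c i - z) <= r i.
Proof.
  intros H. destruct (classic (exists i : I, True)) as [[i0 _]|Hn].
  - set (E := fun y => exists i, y = c i - r i).
    assert (Hb : bound E).
    { exists (c i0 + r i0). intros y [i ->]. specialize (H i i0).
      destruct (abs_ge (c i - c i0)). lra. }
    assert (Hne : exists y, E y) by (exists (c i0 - r i0); exists i0; reflexivity).
    destruct (completeness E Hb Hne) as [m [Hub Hl]]. exists m. intros i.
    assert (c i - r i <= m) by (apply Hub; exists i; reflexivity).
    assert (m <= c i + r i).
    { apply Hl. intros y [j ->]. specialize (H j i). destruct (abs_ge (c j - c i)). lra. }
    apply Rabs_le. lra.
  - exists 0. intros i. exfalso; apply Hn; exists i; auto.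
Qed.

Lemma linf_hyper (I : Type) (x : I -> R * R) (r : I -> R) :
  (forall i j, linf (x i) (x j) <= r i + r j) -> exists w, forall i, linf (x i) w <= r i.
Proof.
  intros H.
  destruct (helly1 I (fun i => fst (x i)) r) as [z1 H1].
  { intros i j. eapply Rle_trans; [apply linf_1 | apply H]. }
  destruct (helly1 I (fun i => snd (x i)) r) as [z2 H2].
  { intros i j. eapply Rle_trans; [apply linf_2 | apply H]. }
  exists (z1, z2). intros i. apply linf_le; simpl; auto.
Qed.

Lemma scale_abs k x : 0 <= k -> Rabs (k * x) = k * Rabs x.
Proof. intros. rewrite Rabs_mult, Rabs_pos_eq; auto. Qed.

Lemma cross_eq a p q : a * fst p <= snd p -> snd q <= a * fst q -> cross a a p q = linf p q.
Proof.
  intros Hp Hq. apply Rle_antisym.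
  2: { unfold cross. apply inf_ge. intros t. apply linf_tri. }
  destruct p as [p1 p2], q as [q1 q2]; simpl in *.
  set (h0 := p2 - a * p1). set (h1 := q2 - a * q1).
  assert (Hs : exists s, 0 <= s <= 1 /\ h0 + s * (h1 - h0) = 0).
  { destruct (Req_dec h0 h1) as [E|E].
    - exists 0. unfold h0, h1 in *. split; [lra|]. lra.
    - exists (h0 / (h0 - h1)). assert (h0 - h1 > 0) by (unfold h0,h1 in *; lra).
      assert (Hk : h0 / (h0 - h1) * (h0 - h1) = h0) by (field; lra).
      assert (0 <= h0) by (unfold h0; lra).
      split; [split|].
      + destruct (Rle_or_lt 0 (h0 / (h0 - h1))); auto. nra.
      + destruct (Rle_or_lt (h0 / (h0 - h1)) 1); auto. unfold h1 in *. nra.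
      + replace (h0 + h0 / (h0 - h1) * (h1 - h0)) with (h0 - h0 / (h0 - h1) * (h0 - h1)) by ring.
        lra. }
  destruct Hs as [s [Hs Hs0]].
  unfold cross. eapply Rle_trans. apply (inf_le _ _ (p1 + s * (q1 - p1))).
  cbv beta.
  replace (a * (p1 + s * (q1 - p1))) with (p2 + s * (q2 - p2))
    by (unfold h0, h1 in Hs0; lra).
  set (M := linf (p1, p2) (q1, q2)).
  assert (A1 : Rabs (p1 - q1) <= M) by apply (linf_1 (p1,p2) (q1,q2)).
  assert (A2 : Rabs (p2 - q2) <= M) by apply (linf_2 (p1,p2) (q1,q2)).
  assert (L1 : linf (p1, p2) (p1 + s * (q1 - p1), p2 + s * (q2 - p2)) <= s * M).
  { apply linf_le; simpl.
    - replace (p1 - (p1 + s * (q1 - p1))) with (s * (p1 - q1)) by ring.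
      rewrite scale_abs by lra. apply Rmult_le_compat_l; lra.
    - replace (p2 - (p2 + s * (q2 - p2))) with (s * (p2 - q2)) by ring.
      rewrite scale_abs by lra. apply Rmult_le_compat_l; lra. }
  assert (L2 : linf (p1 + s * (q1 - p1), p2 + s * (q2 - p2)) (q1, q2) <= (1 - s) * M).
  { apply linf_le; simpl.
    - replace (p1 + s * (q1 - p1) - q1) with ((1 - s) * (p1 - q1)) by ring.
      rewrite scale_abs by lra. apply Rmult_le_compat_l; lra.
    - replace (p2 + s * (q2 - p2) - q2) with ((1 - s) * (p2 - q2)) by ring.
      rewrite scale_abs by lra. apply Rmult_le_compat_l; lra. }
  lra.
Qed.

Definition emb {a b : R} (x : Glue a b) : R * R :=
  match x with inl p => proj1_sig p | inr p => proj1_sig p end.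

Lemma dGlue_emb a (x y : Glue a a) : dGlue a a x y = linf (emb x) (emb y).
Proof.
  destruct x as [[p Hp]|[p Hp]], y as [[q Hq]|[q Hq]]; simpl; try reflexivity.
  - apply cross_eq; auto.
  - rewrite cross_eq by auto. apply linf_sym.
Qed.

Lemma hyper_eq a : hyperconvex (dGlue a a).
Proof.
  intros I x r H.
  destruct (linf_hyper I (fun i => emb (x i)) r) as [w Hw].
  { intros i j. rewrite <- dGlue_emb. apply H. }
  destruct (Rle_dec (a * fst w) (snd w)) as [Hw1|Hw1].
  - exists (inl (exist _ w Hw1)). intros i. rewrite dGlue_emb. apply Hw.
  - assert (Hw2 : snd w <= a * fst w) by lra.
    exists (inr (exist _ w Hw2)). intros i. rewrite dGlue_emb. apply Hw.
Qed.

Inductive idx3 := iC | iD | iE.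

Ltac ab := repeat match goal with
  | |- context [Rabs ?x] => destruct (abs_ge x); generalize dependent (Rabs x); intros
  end.

Lemma not_hyper a b : 0 <= a -> a < b -> b <= 1 -> ~ hyperconvex (dGlue a b).
Proof.
  intros Ha Hab Hb Hyp.
  set (s := / (1 + b)).
  assert (Hs : s * (1 + b) = 1) by (unfold s; field; lra).
  assert (Hs0 : 0 < s) by (unfold s; apply Rinv_0_lt_compat; lra).
  assert (Has : 0 <= a * s) by nra.
  assert (Habs : a * s < b * s) by nra.
  assert (Hbs : b * s <= s) by nra.
  set (dl := b * s - a * s).
  assert (Cp : a * fst (0, 1) <= snd (0, 1)) by (simpl; lra).
  assert (Dp : snd (0, -1) <= b * fst (0, -1)) by (simpl; lra).
  assert (Ep : snd (1, 0) <= b * fst (1, 0)) by (simpl; lra).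
  set (x := fun i => match i with
        | iC => (inl (exist _ (0,1) Cp) : Glue a b)
        | iD => inr (exist _ (0,-1) Dp)
        | iE => inr (exist _ (1,0) Ep) end).
  set (r := fun i => match i with iC => 1 | iD => 1 - dl | iE => dl end).
  assert (CD : cross a b (0,1) (0,-1) <= 2 - dl).
  { unfold cross. eapply Rle_trans. apply (inf_le _ _ (- s)). cbv beta.
    replace (a * - s) with (- (a * s)) by ring. replace (b * - s) with (- (b * s)) by ring.
    assert (linf (0,1) (- s, - (a * s)) <= 1 + a*s) by (apply linf_le; simpl; apply Rabs_le; lra).
    assert (linf (- s, - (b * s)) (0,-1) <= s) by (apply linf_le; simpl; apply Rabs_le; lra).
    unfold dl; lra. }
  assert (CE : cross a b (0,1) (1,0) <= 1 + dl).
  { unfold cross. eapply Rle_trans. apply (inf_le _ _ s). cbv beta.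
    assert (linf (0,1) (s, a * s) <= 1 - a*s) by (apply linf_le; simpl; apply Rabs_le; lra).
    assert (linf (s, b * s) (1,0) <= b * s) by (apply linf_le; simpl; apply Rabs_le; lra).
    unfold dl; lra. }
  destruct (Hyp idx3 x r) as [z Hz].
  { intros i j; destruct i, j; simpl; unfold dl in *;
      try (rewrite ?(linf_sym (1,0)); unfold linf; simpl; apply Rmax_lub; apply Rabs_le; lra);
      lra. }
  pose proof (Hz iC) as HC. pose proof (Hz iD) as HD. pose proof (Hz iE) as HE.
  simpl in HC, HD, HE.
  assert (dl4 : 0 < dl / 4) by (unfold dl; lra).
  destruct z as [[[u v] Hz1] | [[u v] Hz2]]; simpl in *.
  - destruct (inf_approx _ _ _ _ HD dl4) as [t1 Ht1].
    destruct (inf_approx _ _ _ _ HE dl4) as [t2 Ht2].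
    pose proof (linf_1 (u,v) (t2, a*t2)). pose proof (linf_1 (t2, b*t2) (1,0)).
    pose proof (linf_1 (u,v) (t1, a*t1)). pose proof (linf_1 (t1, b*t1) (0,-1)).
    pose proof (linf_2 (t1, b*t1) (0,-1)).
    simpl in *.
    assert (Hdl : dl <= 1/2) by (unfold dl; lra).
    assert (Pn : 0 <= linf (u, v) (t1, a * t1)) by apply linf_nonneg.
    destruct (abs_ge (u - t2)), (abs_ge (t2 - 1)), (abs_ge (u - t1)), (abs_ge (t1 - 0)),
      (abs_ge (b * t1 - -1)).
    assert (u > 0) by lra.
    destruct (Rle_or_lt 0 t1).
    + assert (0 <= b * t1) by (apply Rmult_le_pos; lra). lra.
    + assert (0 <= (1 - b) * (- t1)) by (apply Rmult_le_pos; lra). lra.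
  - destruct (inf_approx _ _ _ _ HC dl4) as [t Ht].
    pose proof (linf_1 (0,1) (t, a*t)). pose proof (linf_2 (0,1) (t, a*t)).
    pose proof (linf_1 (t, b*t) (u,v)). pose proof (linf_2 (t, b*t) (u,v)).
    pose proof (linf_1 (0,-1) (u,v)). pose proof (linf_2 (0,-1) (u,v)).
    pose proof (linf_1 (1,0) (u,v)). pose proof (linf_2 (1,0) (u,v)).
    simpl in *.
    destruct (abs_ge (0 - t)), (abs_ge (1 - a * t)), (abs_ge (t - u)), (abs_ge (b * t - v)),
      (abs_ge (0 - u)), (abs_ge (-1 - v)), (abs_ge (1 - u)), (abs_ge (0 - v)).
    assert (Hba : 0 < b - a <= 1) by lra.
    destruct (Rle_or_lt 0 t).
    + assert (0 <= (b - a) * t) by (apply Rmult_le_pos; lra). unfold dl in *. lra.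
    + assert (0 <= (1 - (b - a)) * (- t)) by (apply Rmult_le_pos; lra). unfold dl in *. lra.
Qed.

Theorem mainTheorem17 (a b : R) (Ha : 0 <= a) (Hab : a <= b) (Hb : b <= 1) :
  hyperconvex (dGlue a b) <-> a = b.
Proof.
  split.
  - intros H. destruct (Rle_lt_or_eq_dec a b Hab) as [Hlt|Heq]; auto.
    exfalso. exact (not_hyper a b Ha Hlt Hb H).
  - intros ->. apply hyper_eq.
Qed.
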